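(* Let $k\ge 2$ and let $G$ be a graph admitting an acyclic $k$-coloring. Then $\chi_s(G)\le k\cdot 2^{k-2}$.
   Context: An acyclic $k$-coloring of a graph is a proper vertex coloring with $k$ colors in which every cycle receives at least three colors (any two color classes induce a forest). A signified graph $(G,\Sigma)$ is a graph $G$ with a set $\Sigma\subseteq E(G)$ of negative edges, other edges positive. Resigning $X\subseteq V(G)$ changes the sign of exactly the edges with one endpoint in $X$; two signified graphs on $G$ are equivalent if one is obtained from the other by resigning. A signified homomorphism is a vertex map sending each edge to an edge of the same sign; a signed homomorphism of $(G,\Sigma)$ to $(H,\Lambda)$ is a signified homomorphism between some signified graphs equivalent to $(G,\Sigma)$ and $(H,\Lambda)$. $\chi_s(G,\Sigma)$ is the minimum number of vertices of a signified graph to which $(G,\Sigma)$ admits a signed homomorphism, and $\chi_s(G)=\max_{\Sigma\subseteq E(G)}\chi_s(G,\Sigma)$. *)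

(* Defs.v *)
From mathcomp Require Import all_boot.
Set Implicit Arguments. Unset Strict Implicit. Unset Printing Implicit Defensive.

Record sgraph (T : finType) := SGraph {
  adj : rel T;
  adj_sym : symmetric adj;
  adj_irr : irreflexive adj }.

Definition is_cycle (T : finType) (G : sgraph T) (s : seq T) : Prop :=
  [/\ uniq s, 2 < size s & cycle (adj G) s].

Definition acyclic_coloring (T : finType) (G : sgraph T) (k : nat)
    (c : T -> 'I_k) : Prop :=
  (forall x y, adj G x y -> c x != c y) /\
  (forall s, is_cycle G s -> 2 < #|[set c x | x in s]|).

(* A sign set Sigma is encoded by any relation S: the edge xy is negative iff
   (x,y) or (y,x) is in S (only edges of the graph matter). *)
Definition neg (T : Type) (S : rel T) : rel T := fun x y => S x y || S y x.

Definition resign (T : finType) (X : {set T}) (sg : rel T) : rel T :=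
  fun x y => sg x y (+) ((x \in X) (+) (y \in X)).

Definition signified_hom (T U : finType) (eG sG : rel T) (eH sH : rel U)
    (phi : T -> U) : bool :=
  [forall x, forall y, eG x y ==>
      eH (phi x) (phi y) && (sH (phi x) (phi y) == sG x y)].

Definition signed_hom (T U : finType) (eG sG : rel T) (eH sH : rel U)
    (phi : T -> U) : bool :=
  [exists X : {set T}, exists Y : {set U},
      signified_hom eG (resign X sG) eH (resign Y sH) phi].

(* A simple graph on 'I_n, encoded by an arbitrary set E of ordered pairs:
   i ~ j iff i != j and (i,j) or (j,i) in E.  Every simple graph on 'I_n
   arises this way. Signs encoded likewise by a set L. *)
Definition tadj n (E : {set 'I_n * 'I_n}) : rel 'I_n :=
  fun i j => (i != j) && (((i, j) \in E) || ((j, i) \in E)).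
Definition tneg n (L : {set 'I_n * 'I_n}) : rel 'I_n :=
  fun i j => ((i, j) \in L) || ((j, i) \in L).

Definition maps_to (T : finType) (G : sgraph T) (S : rel T) (n : nat) : bool :=
  [exists E : {set 'I_n * 'I_n}, exists L : {set 'I_n * 'I_n},
     exists phi : {ffun T -> 'I_n},
       signed_hom (adj G) (neg S) (tadj E) (tneg L) phi].

Lemma maps_to_exists (T : finType) (G : sgraph T) (S : rel T) :
  exists n, maps_to G S n.
Proof.
exists #|T|; apply/existsP.
exists [set p : 'I_#|T| * 'I_#|T| | adj G (enum_val p.1) (enum_val p.2)].
apply/existsP.
exists [set p : 'I_#|T| * 'I_#|T| | S (enum_val p.1) (enum_val p.2)].
apply/existsP; exists [ffun x => enum_rank x].
apply/existsP; exists set0; apply/existsP; exists set0.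
apply/forallP=> x; apply/forallP=> y; apply/implyP=> exy.
rewrite !ffunE /tadj /tneg /resign /neg !inE !enum_rankK /= exy /=.
rewrite !addbF andbT.
have -> : enum_rank x != enum_rank y.
  apply/negP=> /eqP /enum_rank_inj exy'; subst y.
  by rewrite (adj_irr G) in exy.
by rewrite eqxx.
Qed.

Definition chi_s_sig (T : finType) (G : sgraph T) (S : rel T) : nat :=
  ex_minn (maps_to_exists G S).

Definition chi_s (T : finType) (G : sgraph T) : nat :=
  \max_(S : {set T * T}) chi_s_sig G (fun x y => (x, y) \in S).

(* Main.v *)
Require Import Defs.
From mathcomp Require Import all_boot.
Set Implicit Arguments. Unset Strict Implicit. Unset Printing Implicit Defensive.

Section Pot.
Variables (T : finType) (r s : rel T).
Hypotheses (rsym : symmetric r) (rirr : irreflexive r) (ssym : symmetric s).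
Hypothesis nocyc : forall p : seq T, ~ [/\ uniq p, 2 < size p & cycle r p].

Definition rF (F : {set T * T}) : rel T :=
  fun x y => r x y && (((x, y) \in F) || ((y, x) \in F)).

Lemma rF_sym F : symmetric (rF F).
Proof. by move=> x y; rewrite /rF rsym orbC. Qed.

Lemma rF_r F x y : rF F x y -> r x y.
Proof. by case/andP. Qed.

Lemma no_conn F a b : r a b -> ~~ rF F a b -> ~~ connect (rF F) a b.
Proof.
move=> rab nF; have nab : a != b by apply: contraTneq rab => ->; rewrite rirr. apply/negP => /connectP [p pp lp].
case: (shortenP pp) lp => p' pp' up' _ lp.
apply: (nocyc (p := a :: p')); split => //.
  case: p' pp' up' lp => [|z [|w q]] //=.
    by move=> _ _ eab; rewrite eab eqxx in nab.
  by move=> /andP [Haz _] _ ezb; rewrite ezb Haz in nF.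
rewrite /cycle /= rcons_path; apply/andP; split.
  by apply: sub_path pp' => x y; apply: rF_r.
by rewrite -lp rsym.
Qed.

Lemma pot_F n (F : {set T * T}) : #|F| <= n ->
  exists g : T -> bool, forall x y, rF F x y -> g x (+) g y = s x y.
Proof.
elim: n F => [|n IH] F.
  rewrite leqn0 cards_eq0 => /eqP ->; exists (fun _ => false) => x y.
  by rewrite /rF !inE andbF.
case: (set_0Vmem F) => [-> _|[[a b] abF] cF].
  by exists (fun _ => false) => x y; rewrite /rF !inE andbF.
set F' := F :\ (a, b).
have cF' : #|F'| <= n by move: cF; rewrite (cardsD1 (a, b)) abF.
have [g Hg] := IH F' cF'.
have key : forall x y, rF F x y ->
    rF F' x y \/ (r a b /\ ((x = a /\ y = b) \/ (x = b /\ y = a))).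
  move=> x y /andP [rxy Hin]; rewrite /rF /F' !inE rxy /=.
  case: (boolP ((x, y) == (a, b))) => [/eqP [ex ey]|nxy].
    by subst; right; auto.
  case: (boolP ((y, x) == (a, b))) => [/eqP [ey ex]|nyx].
    by subst; right; rewrite rsym; auto.
  by move: Hin => /orP [->|->]; left; rewrite ?orbT.
case Hab: (rF F' a b).
  exists g => x y /key [/Hg //|[_ [[-> ->]|[-> ->]]]]; first exact: Hg.
  by apply: Hg; rewrite rF_sym.
case Hg2: (g a (+) g b == s a b).
  exists g => x y /key [/Hg //|[_ [[-> ->]|[-> ->]]]]; first exact/eqP.
  by rewrite addbC ssym; apply/eqP.
exists (fun x => g x (+) connect (rF F') a x) => x y.
case/key => [Hxy|[rab Hxy]].
  have -> : connect (rF F') a y = connect (rF F') a x.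
    apply/idP/idP => H; apply: (connect_trans H); apply: connect1 => //.
    by rewrite rF_sym.
  by rewrite addbACA addbb addbF; apply: Hg.
have nc := no_conn rab (negbT Hab).
have c0 : connect (rF F') a a := connect0 _ _.
case: Hxy => [[-> ->]|[-> ->]]; rewrite c0 (negbTE nc); move: Hg2;
  rewrite ?(ssym b a); case: (g a); case: (g b); case: (s a b).
all: by [].
Qed.

Lemma potential : exists g : T -> bool, forall x y, r x y -> g x (+) g y = s x y.
Proof.
have [g Hg] := @pot_F #|[set: T * T]| [set: T * T] (leqnn _).
by exists g => x y rxy; apply: Hg; rewrite /rF rxy !inE.
Qed.
End Pot.

Theorem mainTheorem16 (T : finType) (G : sgraph T) (k : nat) :
  2 <= k ->
  (exists c : T -> 'I_k, acyclic_coloring G c) ->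
  chi_s G <= k * 2 ^ (k - 2).
Proof.
case: k => [|[|m]] //= _ [c [cprop cacyc]].
have -> : m.+2 - 2 = m by rewrite subn2.
apply/bigmax_leqP => S _; rewrite /chi_s_sig; case: ex_minnP => n0 _; apply.
set S' := fun x y => (x, y) \in S.
set s := neg S'.
have ssym : symmetric s by move=> x y; rewrite /s /neg orbC.
pose rp (p : 'I_m.+2 * 'I_m.+2) : rel T := fun x y =>
  [&& adj G x y, c x \in [:: p.1; p.2] & c y \in [:: p.1; p.2]].
have hpot : forall p, exists g : T -> bool,
    forall x y, rp p x y -> g x (+) g y = s x y.
  move=> p; apply: potential => //.
  - by move=> x y; rewrite /rp (adj_sym G); congr andb; rewrite andbC.
  - by move=> x; rewrite /rp (adj_irr G).
  move=> q [uq sq cq].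
  have cq' : cycle (adj G) q by apply: sub_cycle cq => x y /and3P [].
  have := cacyc q (And3 uq sq cq'); apply/negP; rewrite -leqNgt.
  apply: (leq_trans (n := #|[set p.1; p.2]|)); last first.
    by rewrite cards2; case: (_ != _).
  apply: subset_leq_card; apply/subsetP => _ /imsetP [x xq ->].
  have := next_cycle cq xq; case/and3P => _ + _.
  by rewrite !inE.
have [pot Hpot] := fin_all_exists hpot.
pose pair (i j : 'I_m.+2) := if i <= j then (i, j) else (j, i).
pose f x j := pot (pair (c x) j) x.
have fedge : forall x y, adj G x y -> f x (c y) (+) f y (c x) = s x y.
  move=> x y axy; have nxy := cprop x y axy; rewrite /f.
  have -> : pair (c y) (c x) = pair (c x) (c y).
    rewrite /pair; case: leqP => h1; case: leqP => h2 //.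
      by apply/eqP; rewrite xpair_eqE; apply/andP; split; apply/eqP/val_inj/eqP; rewrite eqn_leq ?h1 ?h2 // ltnW.
    by have := ltn_trans h1 h2; rewrite ltnn.
  apply: Hpot; rewrite /rp axy /pair; case: leqP => _; by rewrite !inE !eqxx ?orbT.
pose ref (i : 'I_m.+2) := lift i ord0.
pose X := [set u | f u (ref (c u))].
pose fp u j := f u j (+) f u (ref (c u)).
pose W := ('I_m.+2 * {ffun 'I_m -> bool})%type.
pose wv u : W := (c u, [ffun t => fp u (lift (c u) (lift ord0 t))]).
pose bitW (w : W) (j : 'I_m.+2) : bool :=
  match unlift w.1 j with
  | Some j' => match unlift ord0 j' with Some t => w.2 t | None => false end
  | None => false end.
have bitW_ok : forall u j, j != c u -> bitW (wv u) j = fp u j.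
  move=> u j nj; rewrite /bitW /=.
  case: unliftP => [j' ->|ej]; last by rewrite ej eqxx in nj.
  case: unliftP => [t ->|->]; first by rewrite ffunE.
  by rewrite /fp /ref addbb.
pose sgW (w w' : W) := bitW w w'.1 (+) bitW w' w.1.
have eqW : #|{: W}| = m.+2 * 2 ^ m by rewrite card_prod card_ffun !card_ord card_bool.
pose enc (w : W) : 'I_(m.+2 * 2 ^ m) := cast_ord eqW (enum_rank w).
pose dec (i : 'I_(m.+2 * 2 ^ m)) : W := enum_val (cast_ord (esym eqW) i).
have decK : forall w, dec (enc w) = w by move=> w; rewrite /dec /enc cast_ordK enum_rankK.
apply/existsP; exists setT; apply/existsP.
exists [set p | sgW (dec p.1) (dec p.2)]; apply/existsP.
exists [ffun x => enc (wv x)]; apply/existsP; exists X; apply/existsP; exists set0.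
apply/forallP=> x; apply/forallP=> y; apply/implyP=> axy.
have nxy := cprop x y axy.
rewrite !ffunE /tadj /tneg /resign !inE !decK /= addbF andbT.
apply/andP; split.
  apply/negP => /eqP e; have := congr1 dec e; rewrite !decK => -[e'].
  by rewrite e' eqxx in nxy.
have -> : sgW (wv y) (wv x) = sgW (wv x) (wv y) by rewrite /sgW addbC.
rewrite orbb /sgW /= (bitW_ok x (c y)) 1?eq_sym // (bitW_ok y (c x)) //.
rewrite /fp addbACA (fedge x y axy).
by [].
Qed.
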